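(* Let $M_6=\{(\varepsilon_1,\ldots,\varepsilon_6)\in\mathbb R^6 \mid \varepsilon_i\in\{1,-1\},\ \sum_{i=1}^6\varepsilon_i=0\}$. Then every subset of $M_6$ is saturated.
   Context: A finite set $\{v_1,\dots,v_m\}\subset\mathbb Q^N$ is called saturated if $\mathbb Z_+(v_1,\dots,v_m)=\mathbb Z(v_1,\dots,v_m)\cap\mathbb Q_+(v_1,\dots,v_m)$, where $\mathbb Z_+(\cdot)$ is the set of linear combinations with non-negative integer coefficients, $\mathbb Z(\cdot)$ with integer coefficients, and $\mathbb Q_+(\cdot)$ with non-negative rational coefficients. *)

(* Defs.v *)
From HB Require Import structures.
From mathcomp Require Import all_boot all_order all_algebra.
Set Implicit Arguments. Unset Strict Implicit. Unset Printing Implicit Defensive.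
Import Order.TTheory GRing.Theory Num.Theory.
Local Open Scope ring_scope.

Definition Zplus_span (N : nat) (S : seq 'rV[rat]_N) (v : 'rV[rat]_N) : Prop :=
  exists c : 'I_(size S) -> nat, v = \sum_(i < size S) (c i)%:R *: S`_i.

Definition Z_span (N : nat) (S : seq 'rV[rat]_N) (v : 'rV[rat]_N) : Prop :=
  exists c : 'I_(size S) -> int, v = \sum_(i < size S) (c i)%:~R *: S`_i.

Definition Qplus_span (N : nat) (S : seq 'rV[rat]_N) (v : 'rV[rat]_N) : Prop :=
  exists2 c : 'I_(size S) -> rat, (forall i, 0 <= c i)
    & v = \sum_(i < size S) c i *: S`_i.

Definition saturated (N : nat) (S : seq 'rV[rat]_N) : Prop :=
  forall v : 'rV[rat]_N, Zplus_span S v <-> (Z_span S v /\ Qplus_span S v).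

Definition inM6 (v : 'rV[rat]_6) : Prop :=
  (forall i, v 0 i = 1 \/ v 0 i = -1) /\ \sum_(i < 6) v 0 i = 0.

(* Main.v *)
Require Import Defs.
From HB Require Import structures.
From mathcomp Require Import all_boot all_order all_algebra.
From Stdlib Require Import Classical.
Import Order.TTheory GRing.Theory Num.Theory.
Set Implicit Arguments. Unset Strict Implicit. Unset Printing Implicit Defensive.
Local Open Scope ring_scope.

Lemma ex_min (T : eqType) (s : seq T) (F : T -> rat) x0 : x0 \in s ->
  exists2 x, x \in s & forall y, y \in s -> F x <= F y.
Proof.
elim: s x0 => [//|z s IH] x0 _.
case: s IH => [|w s] IH.
  by exists z => [|y]; rewrite ?inE // => /eqP ->.
have [x xs Hx] := IH w (mem_head _ _).
case: (leP (F z) (F x)) => Hzx.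
  exists z; first exact: mem_head.
  move=> y; rewrite inE => /orP [/eqP -> //|ys].
  exact: le_trans Hzx (Hx y ys).
exists x; first by rewrite inE xs orbT.
move=> y; rewrite inE => /orP [/eqP -> |ys]; last exact: Hx.
exact: ltW.
Qed.

Section Gen.
Variable n : nat.
Variable S : 'I_n -> 'rV[rat]_6.
Definition lc (c : 'I_n -> rat) := \sum_(i < n) c i *: S i.
Definition supp (c : 'I_n -> rat) := [set i | c i != 0].

Lemma lc_ext c c' : c =1 c' -> lc c = lc c'.
Proof. by move=> h; apply: eq_bigr => i _; rewrite h. Qed.

Lemma lc_upd (c : 'I_n -> rat) i0 x :
  lc (fun i => if i == i0 then x else c i) = lc c + (x - c i0) *: S i0.
Proof.
rewrite /lc (bigD1 i0) //= eqxx [in RHS](bigD1 i0) //=.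
rewrite [RHS]addrAC -scalerDl [c i0 + _]addrC subrK; congr (_ + _).
by apply: eq_bigr => i /negPf ->.
Qed.

Lemma ratio (c d : 'I_n -> rat) : (forall i, 0 <= c i) -> (forall i, c i = 0 -> d i = 0) ->
  lc d = 0 -> (exists i, d i != 0) ->
  exists c', [/\ forall i, 0 <= c' i, lc c' = lc c & (#|supp c'| < #|supp c|)%N].
Proof.
move=> hc hd hl [i0 hi0].
wlog pos : d hd hl hi0 / 0 < d i0.
  move=> H; rewrite neq_lt in hi0; case/orP: hi0 => h; last first.
    by apply: (H d) => //; rewrite gt_eqF.
  apply: (H (fun i => - d i)).
  - by move=> i /hd ->; rewrite oppr0.
  - rewrite /lc; under eq_bigr do rewrite scaleNr; by rewrite sumrN -/(lc d) hl oppr0.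
  - by rewrite oppr_eq0 lt_eqF.
  - by rewrite oppr_gt0.
have i0P : i0 \in [seq j <- enum 'I_n | 0 < d j] by rewrite mem_filter pos mem_enum.
have [k kP Hk] := @ex_min _ [seq j <- enum 'I_n | 0 < d j] (fun j => c j / d j) i0 i0P.
move: kP; rewrite mem_filter => /andP [dk _].
set t := c k / d k.
have t0 : 0 <= t by rewrite divr_ge0 // ltW.
exists (fun j => c j - t * d j); split.
- move=> j; rewrite subr_ge0; case: (ltP 0 (d j)) => dj.
    by rewrite -ler_pdivlMr //; apply: Hk; rewrite mem_filter dj mem_enum.
  by apply: le_trans (hc j); apply: mulr_ge0_le0.
- rewrite /lc; under eq_bigr do rewrite scalerBl -scalerA.
  by rewrite sumrB -scaler_sumr -/(lc d) hl scaler0 subr0.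
- apply: proper_card; apply/properP; split.
    apply/subsetP => j; rewrite !inE; apply: contraNN => /eqP h.
    by rewrite h (hd _ h) mulr0 subr0.
  exists k; rewrite !inE.
    by apply/eqP => h; move: dk; rewrite (hd _ h) ltxx.
  by rewrite /t divfK ?subrr // gt_eqF.
Qed.
End Gen.

Definition fv (a b : nat) (s : bool) (v : 'rV[rat]_6) : rat :=
  (v 0 (inord a) + (if s then 1 else -1) * v 0 (inord b)) / 2.
Definition pm1 (v : 'rV[rat]_6) := forall j, v 0 j = 1 \/ v 0 j = -1.

Lemma fv_lc n (S : 'I_n -> 'rV[rat]_6) c a b s :
  fv a b s (lc S c) = \sum_i c i * fv a b s (S i).
Proof.
rewrite /fv /lc !summxE; under eq_bigr do rewrite mxE.
rewrite mulr_sumr -big_split mulr_suml; apply: eq_bigr => i _.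
by rewrite mxE /= mulrCA -mulrDr -mulrA.
Qed.

Lemma fv_opp a b s v : fv a b s (- v) = - fv a b s v.
Proof. by rewrite /fv !mxE mulrN -opprD mulNr. Qed.

Lemma fv_pm1 a b s v : pm1 v ->
  [\/ fv a b s v = 0, fv a b s v = 1 | fv a b s v = -1].
Proof.
move=> H; rewrite /fv; case: (H (inord a)) => ->; case: (H (inord b)) => ->;
case: s;
  first [ apply: Or31; apply/eqP; vm_compute; reflexivity
        | apply: Or32; apply/eqP; vm_compute; reflexivity
        | apply: Or33; apply/eqP; vm_compute; reflexivity ].
Qed.

Lemma fv_int a b s v : pm1 v -> fv a b s v \is a Num.int.
Proof.
by move=> /(fv_pm1 a b s) [] ->; rewrite ?rpredN ?rpred0 ?rpred1.
Qed.

Lemma pm1_M6 v : inM6 v -> pm1 v. Proof. by case. Qed.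

Section Main.
Variable n : nat.
Variable S : 'I_n -> 'rV[rat]_6.
Hypothesis HS : forall i, inM6 (S i).

Definition Zs x := exists a : 'I_n -> int, x = \sum_i (a i)%:~R *: S i.
Definition Zp x := exists a : 'I_n -> nat, x = \sum_i (a i)%:R *: S i.

Lemma piv_step (c : 'I_n -> rat) i0 a b s : (forall i, 0 <= c i) -> Zs (lc S c) ->
  c i0 != 0 -> fv a b s (S i0) != 0 ->
  (forall i, i != i0 -> c i != 0 -> fv a b s (S i) = 0) ->
  exists k : nat, c i0 = k%:R.
Proof.
move=> hc [z hz] ci0 fi0 hoth.
have e1 : fv a b s (lc S c) = c i0 * fv a b s (S i0).
  rewrite fv_lc (bigD1 i0) //= big1 ?addr0 // => i hi.
  by case: (eqVneq (c i) 0) => [->|h]; rewrite ?mul0r // hoth // mulr0.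
have i1 : fv a b s (lc S c) \is a Num.int.
  rewrite hz (_ : \sum_i _ = lc S (fun i => (z i)%:~R)) // fv_lc.
  by apply: rpred_sum => i _; apply: rpredM; [exact: intr_int | apply: fv_int; exact: pm1_M6].
have : c i0 \is a Num.int.
  case: (fv_pm1 a b s (pm1_M6 (HS i0))) => h; first by rewrite h eqxx in fi0.
    by move: i1; rewrite e1 h mulr1.
  by move: i1; rewrite e1 h mulrN1 rpredN.
by rewrite (intrEge0 (hc i0)) => /natrP.
Qed.

Hypothesis K : forall c : 'I_n -> rat, (exists i, c i != 0) ->
  (exists d : 'I_n -> rat, [/\ forall i, c i = 0 -> d i = 0, lc S d = 0 & exists i, d i != 0])
  \/ (exists i0 a b s, [/\ c i0 != 0, fv a b s (S i0) != 0 &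
         forall i, i != i0 -> c i != 0 -> fv a b s (S i) = 0]).

Lemma main_ind m : forall c : 'I_n -> rat, (#|supp c| <= m)%N ->
  (forall i, 0 <= c i) -> Zs (lc S c) -> Zp (lc S c).
Proof.
elim: m => [|m IH] c hm hc hz.
  have c0 : forall i, c i = 0.
    move=> i; apply/eqP; apply: contraT => h.
    by move: hm; rewrite leqn0 cards_eq0 => /eqP/setP/(_ i); rewrite !inE h.
  exists (fun _ => 0%N); rewrite /lc; apply: eq_bigr => i _.
  by rewrite c0 !scale0r.
case: (classic (exists i, c i != 0)) => [ne|].
  case: (K ne) => [[d [hd hl hd0]]|[i0 [a [b [s [ci0 fi0 hoth]]]]]].
    have [c' [hc' e hcard]] := ratio hc hd hl hd0.
    rewrite -e; apply: IH => //; first by rewrite -ltnS (leq_trans hcard hm).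
    by rewrite e.
  have [k ck] := piv_step hc hz ci0 fi0 hoth.
  set c' := fun i => if i == i0 then 0 else c i.
  have e : lc S c = lc S c' + k%:R *: S i0 by rewrite lc_upd -ck sub0r scaleNr addrNK.
  have [z hz'] := hz.
  have [m' hm'] : Zp (lc S c').
    apply: IH.
    - have lt : (#|supp c'| < #|supp c|)%N.
        apply: proper_card; apply/properP; split.
          by apply/subsetP => i; rewrite !inE /c'; case: (i == i0); rewrite ?eqxx.
        by exists i0; rewrite !inE // /c' eqxx.
      by rewrite -ltnS (leq_trans lt hm).
    - by move=> i; rewrite /c'; case: (i == i0).
    - exists (fun i => if i == i0 then z i0 - k%:Z else z i).
      rewrite (_ : \sum_i _ = lc S (fun i => if i == i0 then (z i0 - k%:Z)%:~R else (z i)%:~R)).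
        have hz2 : lc S (fun i => (z i)%:~R) = lc S c by rewrite hz'.
        by rewrite [RHS]lc_upd hz2 e intrB [(z i0)%:~R - _ - _]addrAC subrr add0r scaleNr addrK.
      by apply: eq_bigr => i _; case: (i == i0).
  exists (fun i => if i == i0 then (m' i0 + k)%N else m' i).
  rewrite (_ : \sum_i _ = lc S (fun i => if i == i0 then (m' i0 + k)%:R else (m' i)%:R)).
    have hm2 : lc S (fun i => (m' i)%:R) = lc S c' by rewrite hm'.
    by rewrite [RHS]lc_upd hm2 e natrD addrAC subrr add0r.
  by apply: eq_bigr => i _; case: (i == i0).
move=> h; exists (fun _ => 0%N); rewrite /lc; apply: eq_bigr => i _.
have -> : c i = 0 by apply/eqP; apply: contraT => hi; case: h; exists i.
by rewrite !scale0r.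
Qed.
End Main.

Definition pats : seq (seq bool) := [::
  [:: true; true; false; false; false; true];
  [:: true; false; true; false; false; true];
  [:: true; false; false; true; false; true];
  [:: true; false; false; false; true; true];
  [:: false; true; true; false; false; true];
  [:: false; true; false; true; false; true];
  [:: false; true; false; false; true; true];
  [:: false; false; true; true; false; true];
  [:: false; false; true; false; true; true];
  [:: false; false; false; true; true; true]].
Definition circs : seq (seq (nat * bool)) := [::
  [:: (0, false); (1, true); (5, true); (7, false)];
  [:: (0, false); (1, true); (6, true); (8, false)];
  [:: (0, false); (2, true); (4, true); (7, false)];
  [:: (0, false); (2, true); (6, true); (9, false)];
  [:: (0, false); (3, true); (4, true); (8, false)];
  [:: (0, false); (3, true); (5, true); (9, false)];
  [:: (1, false); (2, true); (4, true); (5, false)];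
  [:: (1, false); (2, true); (8, true); (9, false)];
  [:: (1, false); (3, true); (4, true); (6, false)];
  [:: (1, false); (3, true); (7, true); (9, false)];
  [:: (2, false); (3, true); (5, true); (6, false)];
  [:: (2, false); (3, true); (7, true); (8, false)];
  [:: (4, false); (5, true); (8, true); (9, false)];
  [:: (4, false); (6, true); (7, true); (9, false)];
  [:: (5, false); (6, true); (7, true); (8, false)];
  [:: (0, false); (1, false); (2, true); (3, true); (4, true); (9, false)];
  [:: (0, false); (1, true); (2, false); (3, true); (5, true); (8, false)];
  [:: (0, false); (1, true); (2, true); (3, false); (6, true); (7, false)];
  [:: (0, false); (1, true); (4, false); (5, true); (6, true); (9, false)];
  [:: (0, false); (1, true); (4, true); (7, false); (8, false); (9, true)];
  [:: (0, false); (2, true); (4, true); (5, false); (6, true); (8, false)];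
  [:: (0, false); (2, true); (5, true); (7, false); (8, true); (9, false)];
  [:: (0, false); (3, true); (4, true); (5, true); (6, false); (7, false)];
  [:: (0, false); (3, true); (6, true); (7, true); (8, false); (9, false)];
  [:: (1, false); (2, true); (4, true); (6, false); (7, false); (8, true)];
  [:: (1, false); (2, true); (5, false); (6, true); (7, true); (9, false)];
  [:: (1, false); (3, true); (4, true); (5, false); (7, true); (8, false)];
  [:: (1, false); (3, true); (5, true); (6, false); (8, true); (9, false)];
  [:: (2, false); (3, true); (4, false); (5, true); (7, true); (9, false)];
  [:: (2, false); (3, true); (4, true); (6, false); (8, false); (9, true)]].
Definition bt (l j : nat) : bool := nth false (nth [::] pats l) j.
Definition zb (a b : nat) (s : bool) (l : nat) : bool :=
  if s then bt l a != bt l b else bt l a == bt l b.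
Fixpoint bitlists (n : nat) : seq (seq bool) :=
  if n is n'.+1 then [seq x :: y | x <- [:: true; false], y <- bitlists n'] else [:: [::]].
Definition haspiv (bs : seq bool) : bool :=
  has (fun a => has (fun b => has (fun s => has (fun l0 =>
     nth false bs l0 && ~~ zb a b s l0 &&
     all (fun l => ~~ nth false bs l || (l == l0) || zb a b s l) (iota 0 10))
   (iota 0 10)) [:: true; false]) (iota 0 6)) (iota 0 6).
Definition hascirc (bs : seq bool) : bool :=
  has (fun C => all (fun p => nth false bs p.1) C) circs.
Definition checkCL := all (fun bs => ~~ has id bs || haspiv bs || hascirc bs) (bitlists 10).
Lemma checkCL_ok : checkCL = true. Proof. by vm_compute. Qed.

Definition sgn (b : bool) : int := if b then 1 else -1.
Lemma sgnR b : (sgn b)%:~R = (if b then 1 else -1 : rat).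
Proof. by case: b; rewrite /sgn ?rmorphN ?rmorph1. Qed.

Definition sumZ (bs : seq bool) : int := foldr (fun b acc => sgn b + acc) 0 bs.
Definition checkClass := all (fun bs => (sumZ bs != 0) ||
   has (fun l => (bs == nth [::] pats l) || (bs == map negb (nth [::] pats l))) (iota 0 10))
  (bitlists 6).
Lemma checkClass_ok : checkClass = true. Proof. by vm_compute. Qed.
Definition checkInj := all (fun l => all (fun l' => (l == l') ||
    has (fun j => bt l j != bt l' j) (iota 0 6)) (iota 0 10)) (iota 0 10)
  && all (fun l => bt l 5) (iota 0 10).
Lemma checkInj_ok : checkInj = true. Proof. by vm_compute. Qed.
Definition cs (C : seq (nat * bool)) (j : nat) : int :=
  foldr (fun p acc => sgn (p.2 == bt p.1 j) + acc) 0 C.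
Definition ckZ (C : seq (nat * bool)) (l : nat) : int :=
  foldr (fun p acc => (if p.1 == l then sgn p.2 else 0) + acc) 0 C.
Definition checkCirc := all (fun C => all (fun p => p.1 < 10)%N C &&
    all (fun j => cs C j == 0) (iota 0 6) &&
    (if C is p1 :: _ then ckZ C p1.1 != 0 else false)) circs.
Lemma checkCirc_ok : checkCirc = true. Proof. by vm_compute. Qed.

Lemma mem_iota0 k m : (k \in iota 0 m) = (k < m)%N.
Proof. by rewrite mem_iota add0n. Qed.

Lemma mem_bitlists bs : bs \in bitlists (size bs).
Proof.
elim: bs => [|b bs IH] /=; first by rewrite inE.
by case: b; rewrite !mem_cat map_f ?orbT.
Qed.

Lemma sum_bits (bs : seq bool) :
  \sum_(j < size bs) (if nth false bs j then 1 else -1 : rat) = (sumZ bs)%:~R.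
Proof.
elim: bs => [|b bs IH]; first by rewrite big_ord0.
by rewrite big_ord_recl /= IH intrD sgnR.
Qed.

Lemma sum_bits' n (bs : seq bool) : size bs = n ->
  \sum_(j < n) (if nth false bs j then 1 else -1 : rat) = (sumZ bs)%:~R.
Proof. by move=> <-; exact: sum_bits. Qed.

Definition rv (l : nat) : 'rV[rat]_6 := \row_(j < 6) (if bt l j then 1 else -1).

Lemma rv_pm1 l : pm1 (rv l).
Proof. by move=> j; rewrite mxE; case: (bt l j); [left|right]. Qed.

Lemma class v : inM6 v -> exists2 l, (l < 10)%N & (v = rv l \/ v = - rv l).
Proof.
case=> hpm hsum.
set bs := [seq v 0 j == 1 | j <- enum 'I_6].
have sz : size bs = 6%N by rewrite size_map size_enum_ord.
have nthbs : forall j : 'I_6, nth false bs j = (v 0 j == 1).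
  by move=> j; rewrite (nth_map ord0) ?size_enum_ord // nth_ord_enum.
have m1 : (-1 == 1 :> rat) = false by vm_compute.
have ve : forall j : 'I_6, v 0 j = if nth false bs j then 1 else -1.
  by move=> j; rewrite nthbs; case: (hpm j) => ->; rewrite ?eqxx ?m1.
have s0 : sumZ bs = 0.
  have s1 : (sumZ bs)%:~R = 0 :> rat.
    by rewrite -(sum_bits' sz) -[RHS]hsum; apply: eq_bigr => j _; rewrite ve.
  by apply/eqP; rewrite -(intr_eq0 rat) s1.
have := checkClass_ok; rewrite /checkClass => /allP /(_ bs).
rewrite -{1}sz mem_bitlists s0 eqxx orFb => /(_ isT) /hasP [l].
rewrite mem_iota /= => hl /orP [] /eqP e; exists l => //; [left|right];
  apply/rowP => j; rewrite ve !mxE /bt e //.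
rewrite (nth_map false); last by rewrite -(size_map negb) -e sz ltn_ord.
by case: (nth false _ j); rewrite ?opprK.
Qed.

Lemma fv_rv a b s l : (a < 6)%N -> (b < 6)%N ->
  (fv a b s (rv l) == 0) = zb a b s l.
Proof.
move=> ha hb; rewrite /fv !mxE !inordK // /zb.
by case: (bt l a); case: (bt l b); case: s; vm_compute.
Qed.

Lemma rv_inj l l' : (l < 10)%N -> (l' < 10)%N -> rv l = rv l' -> l = l'.
Proof.
move=> hl hl' e; apply/eqP; move: checkInj_ok; rewrite /checkInj => /andP [/allP H _].
have := H l; rewrite mem_iota0 hl => /(_ isT) /allP /(_ l').
rewrite mem_iota0 hl' => /(_ isT) /orP [//|/hasP [j]].
rewrite mem_iota0 => hj; move/(congr1 (fun M : 'rV[rat]_6 => M 0 (inord j))): e.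
rewrite !mxE inordK //.
have m1 : (-1 == 1 :> rat) = false by vm_compute.
by case: (bt l j); case: (bt l' j) => // /eqP; rewrite ?m1 // eq_sym m1.
Qed.

Lemma rv_neq l l' : (l < 10)%N -> (l' < 10)%N -> rv l <> - rv l'.
Proof.
move=> hl hl' e; move: checkInj_ok; rewrite /checkInj => /andP [_ /allP H].
move/(congr1 (fun M : 'rV[rat]_6 => M 0 (inord 5))): e.
rewrite !mxE inordK // H ?mem_iota0 // H ?mem_iota0 //.
Qed.

Lemma circ_rel C : C \in circs ->
  \sum_(p <- C) (if p.2 then 1 else -1) *: rv p.1 = 0.
Proof.
move=> hC; move: checkCirc_ok; rewrite /checkCirc => /allP /(_ C hC) /andP [/andP [_ /allP H] _].
apply/rowP => j; rewrite summxE mxE.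
have -> : \sum_(p <- C) ((if p.2 then 1 else -1) *: rv p.1) 0 j = (cs C j)%:~R.
  elim: C {hC H} => [|p C IH]; first by rewrite big_nil.
  rewrite big_cons IH /= intrD sgnR !mxE; congr (_ + _).
  by case: p.2; case: (bt p.1 j); rewrite ?mulr1 ?mulrN1 ?opprK.
by rewrite (eqP (H j _)) // mem_iota0.
Qed.

Definition sg (v : 'rV[rat]_6) (l : nat) : rat :=
  if v == rv l then 1 else if v == - rv l then -1 else 0.

Lemma sg_scale v l : sg v l *: v = if (v == rv l) || (v == - rv l) then rv l else 0.
Proof.
rewrite /sg; case: eqP => [->|_]; first by rewrite scale1r.
by case: eqP => [->|_] /=; rewrite ?scaleN1r ?opprK ?scale0r.
Qed.

Lemma sg_rv l1 l : (l1 < 10)%N -> (l < 10)%N ->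
  sg (rv l1) l = (if l1 == l then 1 else 0) /\ sg (- rv l1) l = (if l1 == l then -1 else 0).
Proof.
move=> h1 h; rewrite /sg eqr_opp.
have n1 : forall x y, (x < 10)%N -> (y < 10)%N -> (- rv x == rv y) = false.
  by move=> x y hx hy; apply/eqP => e; apply: (rv_neq hy hx); rewrite -e.
have n2 : forall x y, (x < 10)%N -> (y < 10)%N -> (rv x == - rv y) = false.
  by move=> x y hx hy; apply/eqP; apply: rv_neq.
case: (eqVneq l1 l) => [<-|ne]; first by rewrite eqxx n1.
have -> : (rv l1 == rv l) = false by apply/eqP => /(rv_inj h1 h) e; rewrite e eqxx in ne.
by rewrite n1 ?n2.
Qed.

Lemma delta_sum n (S : 'I_n -> 'rV[rat]_6) i : \sum_k (k == i)%:R *: S k = S i.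
Proof.
rewrite (bigD1 i) //= eqxx scale1r big1 ?addr0 // => k /negPf ->.
by rewrite scale0r.
Qed.

Section KS.
Variable n : nat.
Variable S : 'I_n -> 'rV[rat]_6.
Hypothesis HS : forall i, inM6 (S i).

Definition nodup (c : 'I_n -> rat) := forall i j, i != j -> c i != 0 -> c j != 0 ->
  S i <> S j /\ S i <> - S j.

Lemma pres_sum (c : 'I_n -> rat) l : nodup c ->
  (exists2 i, c i != 0 & (S i = rv l \/ S i = - rv l)) ->
  \sum_i (if c i != 0 then sg (S i) l else 0) *: S i = rv l.
Proof.
move=> hnd [i1 ci1 hi1].
rewrite (bigD1 i1) //= ci1 sg_scale.
have -> : (S i1 == rv l) || (S i1 == - rv l) by case: hi1 => ->; rewrite eqxx ?orbT.
rewrite big1 ?addr0 // => i hi.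
case: (eqVneq (c i) 0) => [_|ci]; first by rewrite /= scale0r.
rewrite /= sg_scale; case: ifP => // /orP [] /eqP e; exfalso;
  have [h1 h2] := hnd i i1 hi ci ci1; case: hi1 => e1.
- by apply: h1; rewrite e e1.
- by apply: h2; rewrite e e1 opprK.
- by apply: h2; rewrite e e1.
- by apply: h1; rewrite e e1.
Qed.

Lemma Kproof (c : 'I_n -> rat) : (exists i, c i != 0) ->
  (exists d : 'I_n -> rat, [/\ forall i, c i = 0 -> d i = 0, lc S d = 0 & exists i, d i != 0])
  \/ (exists i0 a b s, [/\ c i0 != 0, fv a b s (S i0) != 0 &
         forall i, i != i0 -> c i != 0 -> fv a b s (S i) = 0]).
Proof.
move=> [i1 ci1].
case: (classic (exists i j, [/\ i != j, c i != 0, c j != 0 & S i = S j \/ S i = - S j]))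
  => [[i [j [hij ci cj e]]]|hnd0].
  have nij : forall k, c k = 0 -> (k == i) = false /\ (k == j) = false.
    by move=> k ck; split; apply/eqP => ek; [move: ci | move: cj]; rewrite -ek ck eqxx.
  left; case: e => e.
    exists (fun k => (k == i)%:R - (k == j)%:R); split.
    - by move=> k /nij [-> ->]; rewrite subrr.
    - rewrite /lc; under eq_bigr do rewrite scalerBl.
      by rewrite sumrB !delta_sum e subrr.
    - by exists i; rewrite eqxx (negbTE hij); vm_compute.
  exists (fun k => (k == i)%:R + (k == j)%:R); split.
  - by move=> k /nij [-> ->]; rewrite addr0.
  - rewrite /lc; under eq_bigr do rewrite scalerDl.
    by rewrite big_split /= !delta_sum e addNr.
  - by exists i; rewrite eqxx (negbTE hij); vm_compute.
have hnd : nodup c.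
  by move=> i j hij ci cj; split => e; apply: hnd0; exists i, j; split => //; [left|right].
case: (classic (exists i0 a b s, [/\ c i0 != 0, fv a b s (S i0) != 0 &
         forall i, i != i0 -> c i != 0 -> fv a b s (S i) = 0])) => [hp|hnp].
  by right.
left.
set pres := fun l => [exists i, (c i != 0) && ((S i == rv l) || (S i == - rv l))].
set bs := [seq pres l | l <- iota 0 10].
have nthb : forall l, (l < 10)%N -> nth false bs l = pres l.
  by move=> l hl; rewrite (nth_map 0%N) ?size_iota // nth_iota.
have presP : forall l, reflect (exists2 i, c i != 0 & (S i = rv l \/ S i = - rv l)) (pres l).
  move=> l; apply: (iffP existsP) => [[i /andP [ci /orP [] /eqP e]]|[i ci [] e]];
    exists i; rewrite ?ci ?e ?eqxx ?orbT //; by [left|right].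
have bsin : bs \in bitlists 10 by have := mem_bitlists bs; rewrite size_map size_iota.
have hasb : has id bs.
  have [l hl e] := class (HS i1); apply/hasP; exists (pres l).
    by apply: map_f; rewrite mem_iota0.
  by apply/presP; exists i1.
have := checkCL_ok; rewrite /checkCL => /allP /(_ bs bsin).
rewrite hasb -[~~ true]/false orFb => /orP [hp|hc].
  exfalso; apply: hnp.
  move: hp => /hasP [a ha /hasP [b hb /hasP [s _ /hasP [l0 hl0 /andP [/andP [bl0 zl0] hall]]]]].
  move: ha hb hl0; rewrite !mem_iota0 => ha hb hl0; rewrite nthb // in bl0.
  have [i0 ci0 e0] := presP l0 bl0.
  exists i0, a, b, s; split => //.
    by case: e0 => ->; rewrite ?fv_opp ?oppr_eq0 fv_rv.
  move=> i hi ci; have [l hl el] := class (HS i).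
  have pl : pres l by apply/presP; exists i.
  move: (allP hall l); rewrite mem_iota0 hl nthb // pl /= => /(_ isT) /orP [/eqP el0|zl].
    exfalso; subst l0; have [h1 h2] := hnd i i0 hi ci ci0.
    by case: el => e1; case: e0 => e2; [apply: h1|apply: h2|apply: h2|apply: h1];
      rewrite e1 e2 ?opprK.
  by move/eqP: (fv_rv s l ha hb); rewrite zl => h; case: el => ->;
    rewrite ?fv_opp h ?oppr0.
move: hc => /hasP [C hC hallC].
have := checkCirc_ok; rewrite /checkCirc => /allP /(_ C hC) /andP [/andP [hlt _] hck].
have hpres : forall p, p \in C -> exists2 i, c i != 0 & (S i = rv p.1 \/ S i = - rv p.1).
  move=> p hp; apply/presP; rewrite -nthb; first exact: (allP hallC p hp).
  exact: (allP hlt p hp).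
exists (fun i => \sum_(p <- C) (if p.2 then 1 else -1) * (if c i != 0 then sg (S i) p.1 else 0)).
split.
- by move=> i ci; rewrite ci eqxx /= big1 // => p _; rewrite mulr0.
- rewrite /lc; under eq_bigr do rewrite scaler_suml.
  rewrite exchange_big /= -[RHS](circ_rel hC) big_seq [RHS]big_seq; apply: eq_bigr => p hp.
  under eq_bigr do rewrite -scalerA.
  by rewrite -scaler_sumr pres_sum //; apply: hpres.
- case: C hC hallC hlt hck hpres => [//|p1 C'] hC hallC hlt hck hpres.
  have [i ci ei] := hpres p1 (mem_head _ _).
  have hp1 : (p1.1 < 10)%N by have := allP hlt p1 (mem_head _ _).
  have key : \sum_(p <- p1 :: C') (if p.2 then 1 else -1) * sg (rv p1.1) p.1 = (ckZ (p1 :: C') p1.1)%:~R.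
    elim: (p1 :: C') (allP hlt) => [|q D IH] hD; first by rewrite big_nil.
    rewrite big_cons IH /=; last by move=> x hx; apply: hD; rewrite inE hx orbT.
    have hq : (q.1 < 10)%N by apply: hD; exact: mem_head.
    rewrite (sg_rv hp1 hq).1 intrD eq_sym; congr (_ + _).
    by case: (q.1 == p1.1); rewrite ?mulr1 ?mulr0 ?sgnR.
  exists i; rewrite ci /=.
  case: ei => ->.
    by rewrite key intr_eq0.
  have -> : \sum_(p <- p1 :: C') (if p.2 then 1 else -1) * sg (- rv p1.1) p.1
      = - \sum_(p <- p1 :: C') (if p.2 then 1 else -1) * sg (rv p1.1) p.1.
    rewrite -sumrN big_seq [RHS]big_seq; apply: eq_bigr => p hp.
    have hq : (p.1 < 10)%N by apply: (allP hlt).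
    by rewrite (sg_rv hp1 hq).1 (sg_rv hp1 hq).2; case: (p1.1 == p.1); rewrite ?mulrN1 ?mulr1 ?mulr0 ?oppr0.
  by rewrite key oppr_eq0 intr_eq0.
Qed.
End KS.

Theorem mainTheorem2 (S : seq 'rV[rat]_6) :
  (forall v, v \in S -> inM6 v) -> saturated S.
Proof.
move=> HS v; split.
  move=> [a ha]; split.
    by exists (fun i => (a i)%:Z).
  by exists (fun i => (a i)%:R) => // i; exact: ler0n.
move=> [[z hz] [c hc hv]].
have HS' : forall i : 'I_(size S), inM6 S`_i by move=> i; apply: HS; exact: mem_nth.
have := @main_ind _ (fun i : 'I_(size S) => S`_i) HS' (Kproof HS') #|supp c| c (leqnn _) hc.
rewrite /lc -hv => /(_ _).
by case=> [|a ha]; [exists z | exists a].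
Qed.
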